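(* Consider the setting described in the context, with distinct treatments $s\neq t$. Assume (C1), (C2), (C3), that $X$ and $XY^{(\ell)}$, $\ell=1,\dots,k$, have finite second-order moments, and that ${\rm var}(X\mid Z=z)$ is positive definite for every $z\in\mathcal Z$. Let $\beta_\ell(z)=\{{\rm var}(X\mid Z=z)\}^{-1}{\rm cov}(X,Y^{(\ell)}\mid Z=z)$, $\beta(z)=\sum_{\ell=1}^k\pi_\ell\beta_\ell(z)$, and \begin{align*} \sigma_U^2&=E\{{\rm var}(Y^{(t)}\mid Z)/\pi_t+{\rm var}(Y^{(s)}\mid Z)/\pi_s\},\\ \sigma_A^2&=E[{\rm var}\{Y^{(t)}-X^T\beta_t(Z)\mid Z\}/\pi_t+{\rm var}\{Y^{(s)}-X^T\beta_s(Z)\mid Z\}/\pi_s]+E[\{\beta_t(Z)-\beta_s(Z)\}^T{\rm var}(X\mid Z)\{\beta_t(Z)-\beta_s(Z)\}],\\ \sigma_B^2&=E[{\rm var}\{Y^{(t)}-X^T\beta(Z)\mid Z\}/\pi_t+{\rm var}\{Y^{(s)}-X^T\beta(Z)\mid Z\}/\pi_s]. \end{align*} Then \begin{align*} \sigma_U^2-\sigma_A^2=&\,E\big[\{\pi_s\beta_t(Z)+\pi_t\beta_s(Z)\}^T{\rm var}(X\mid Z)\{\pi_s\beta_t(Z)+\pi_t\beta_s(Z)\}\big]\{\pi_t\pi_s(\pi_t+\pi_s)\}^{-1}\\ &+E\big[\{\beta_t(Z)-\beta_s(Z)\}^T{\rm var}(X\mid Z)\{\beta_t(Z)-\beta_s(Z)\}\big]\{(\pi_t+\pi_s)^{-1}-1\},\\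 \sigma_B^2-\sigma_A^2=&\,E\big[\{\beta_t(Z)-\beta(Z)\}^T{\rm var}(X\mid Z)\{\beta_t(Z)-\beta(Z)\}\big]\pi_t^{-1}+E\big[\{\beta_s(Z)-\beta(Z)\}^T{\rm var}(X\mid Z)\{\beta_s(Z)-\beta(Z)\}\big]\pi_s^{-1}\\ &-E\big[\{\beta_t(Z)-\beta_s(Z)\}^T{\rm var}(X\mid Z)\{\beta_t(Z)-\beta_s(Z)\}\big]. \end{align*} Consequently $\sigma_A^2\le\sigma_U^2$, with equality if and only if for every $z\in\mathcal Z$: $\pi_s\beta_t(z)+\pi_t\beta_s(z)=0$ and $\{\beta_t(z)-\beta_s(z)\}(1-\pi_t-\pi_s)=0$; and $\sigma_A^2\le\sigma_B^2$, with equality if and only if for every $z\in\mathcal Z$: $\beta(z)=\{\pi_s\beta_t(z)+\pi_t\beta_s(z)\}/(\pi_s+\pi_t)$ and $\{\beta_t(z)-\beta_s(z)\}(1-\pi_t-\pi_s)=0$.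
   Context: Setting: a trial compares $k\ge2$ treatments (fixed) with known assignment proportions $\pi_1,\dots,\pi_k\in(0,1)$, $\sum_t\pi_t=1$. Let $e_t$ be the $t$-th unit vector in $\mathbb R^k$. For patient $i=1,\dots,n$: $I_i\in\{e_1,\dots,e_k\}$ is the treatment indicator, $Y_i^{(1)},\dots,Y_i^{(k)}$ are potential responses, $W_i$ the observed covariate vector, $Z_i$ a discrete function of $W_i$ used in randomization, $X_i$ a vector-valued function of $W_i$. Observed $Y_i=Y_i^{(t)}$ iff $I_i=e_t$. Generic variables $(Y^{(1)},\dots,Y^{(k)},W)$, $Z$, $X$. Conditions: (C1) $(Y_i^{(1)},\dots,Y_i^{(k)},W_i)$, $i=1,\dots,n$, are i.i.d. as $(Y^{(1)},\dots,Y^{(k)},W)$, each $Y^{(t)}$ with finite second moments. (C2) $(I_1,\dots,I_n)$ and $\{(Y_i^{(1)},\dots,Y_i^{(k)},W_i)\}_{i}$ are conditionally independent given $Z_1,\dots,Z_n$. (C3) $Z$ takes finitely many values in $\mathcal Z$; ${\rm pr}(I_i=e_t\mid Z_1,\dots,Z_n)=\pi_t$ for all $t,i$; and for every $z\in\mathcal Z$ and $t$, $D_t(z)/n(z)\to0$ in probability, where $n(z)=\#\{i:Z_i=z\}$, $n_t(z)=\#\{i:Z_i=z,I_i=e_t\}$, $D_t(z)=n_t(z)-\pi_tn(z)$. *)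

(* Defs.v *)
From HB Require Import structures.
From mathcomp Require Import all_boot all_order all_algebra.
From mathcomp Require Import all_classical all_reals all_analysis.
Set Implicit Arguments. Unset Strict Implicit. Unset Printing Implicit Defensive.
Import Order.TTheory GRing.Theory Num.Theory.
Local Open Scope ring_scope.
Local Open Scope classical_set_scope.

Section CondMoments.
Context {d : measure_display} {T : measurableType d} {R : realType}
  (P : probability T R) {Zt : finType} (Z : T -> Zt).

Definition pZ (z : Zt) : R := fine (P (Z @^-1` [set z])).

Definition condE (f : T -> R) (z : Zt) : R :=
  Rintegral P (Z @^-1` [set z]) f / pZ z.

Definition ccov (f g : T -> R) (z : Zt) : R :=
  condE (fun x => (f x - condE f z) * (g x - condE g z)) z.

Definition cvar (f : T -> R) (z : Zt) : R := ccov f f z.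

Definition EZ (g : Zt -> R) : R := \sum_(z : Zt) pZ z * g z.

Context {p : nat} (X : 'I_p -> T -> R).

Definition varX (z : Zt) : 'M[R]_p := \matrix_(i, j) ccov (X i) (X j) z.

Definition covXf (f : T -> R) (z : Zt) : 'cV[R]_p := \col_i ccov (X i) f z.

Definition betaf (f : T -> R) (z : Zt) : 'cV[R]_p := invmx (varX z) *m covXf f z.

Definition Xdot (b : 'cV[R]_p) (x : T) : R := \sum_i X i x * b i 0.

End CondMoments.

Definition qform {R : ringType} {p : nat} (A : 'M[R]_p) (v : 'cV[R]_p) : R :=
  (v^T *m A *m v) 0 0.

Definition posdef {R : numDomainType} {p : nat} (A : 'M[R]_p) : Prop :=
  forall v : 'cV[R]_p, v != 0 -> 0 < qform A v.

(* Main.v *)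
Require Import Defs.
From HB Require Import structures.
From mathcomp Require Import all_boot all_order all_algebra.
From mathcomp Require Import all_classical all_reals all_analysis.
From mathcomp Require Import ring lra measurable_realfun.
Import Order.TTheory GRing.Theory Num.Theory.
Local Open Scope ring_scope.
Local Open Scope classical_set_scope.


Section Alg.
Context {R : realType} {p : nat}.
Implicit Types (V : 'M[R]_p) (u v w : 'cV[R]_p).

Definition Bf V u v : R := (u^T *m V *m v) 0 0.

Lemma qformE V v : qform V v = Bf V v v. Proof. by []. Qed.
Lemma BfDl V u v w : Bf V (u + v) w = Bf V u w + Bf V v w.
Proof. by rewrite /Bf linearD /= !mulmxDl mxE. Qed.
Lemma BfDr V u v w : Bf V w (u + v) = Bf V w u + Bf V w v.
Proof. by rewrite /Bf !mulmxDr mxE. Qed.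
Lemma BfZl V c u w : Bf V (c *: u) w = c * Bf V u w.
Proof. by rewrite /Bf linearZ /= -!scalemxAl mxE. Qed.
Lemma BfZr V c u w : Bf V w (c *: u) = c * Bf V w u.
Proof. by rewrite /Bf -!scalemxAr mxE. Qed.
Lemma BfNl V u w : Bf V (- u) w = - Bf V u w.
Proof. by rewrite -scaleN1r BfZl mulN1r. Qed.
Lemma BfNr V u w : Bf V w (- u) = - Bf V w u.
Proof. by rewrite -scaleN1r BfZr mulN1r. Qed.
Lemma BfC V u v : V^T = V -> Bf V u v = Bf V v u.
Proof.
move=> hV; rewrite /Bf.
have -> : (u^T *m V *m v) 0 0 = ((u^T *m V *m v)^T) 0 0 by rewrite [RHS]mxE.
by rewrite !trmx_mul trmxK hV mulmxA.
Qed.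
End Alg.


Section Alg2.
Context {R : realType} {p : nat}.
Implicit Types (V : 'M[R]_p) (u v w : 'cV[R]_p).

Lemma Bf0 V u : Bf V 0 u = 0.
Proof. by rewrite -(scale0r 0) BfZl mul0r. Qed.

Lemma q_ge0 V v : posdef V -> 0 <= qform V v.
Proof.
move=> hV; have [->|nz] := eqVneq v 0; first by rewrite qformE Bf0.
exact/ltW/hV.
Qed.

Lemma q_eq0 V v : posdef V -> (qform V v = 0 <-> v = 0).
Proof.
move=> hV; split; last by move=> ->; rewrite qformE Bf0.
move=> h; apply/eqP; apply: contraT => nz.
by have := hV _ nz; rewrite h ltxx.
Qed.

Lemma posdef_unit V : posdef V -> V \in unitmx.
Proof.
move=> hV; rewrite -row_full_unit /row_full.
have hk : kermx V = 0.
  apply/row_matrixP => i; rewrite row0.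
  have hr : row i (kermx V) *m V = 0 by rewrite -row_mul mulmx_ker row0.
  have : qform V (row i (kermx V))^T = 0.
    by rewrite /qform trmxK hr mul0mx mxE.
  move/(q_eq0 _ _ hV) => /(congr1 trmx); by rewrite trmxK trmx0.
have := mxrank_ker V; rewrite hk mxrank0 => /esym/eqP; rewrite subn_eq0 => h.
by rewrite eqn_leq rank_leq_col h.
Qed.
End Alg2.

Section Alg3.
Context {R : realType} {p : nat}.
Implicit Types (V : 'M[R]_p) (u v w e d : 'cV[R]_p).

Lemma hlem V e d (a b : R) : posdef V -> 0 < a -> 0 < b -> a + b <= 1 ->
  let h := qform V e / (a * b * (a + b)) + qform V d * (1 - a - b) / (a + b) in
  0 <= h /\ (h = 0 <-> e = 0 /\ (1 - a - b) *: d = 0).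
Proof.
move=> hV a0 b0 ab1 h.
have h1 : 0 <= qform V e / (a * b * (a + b)).
  by apply: divr_ge0; [exact: q_ge0| apply: ltW; rewrite !mulr_gt0 ?addr_gt0].
have h2 : 0 <= qform V d * (1 - a - b) / (a + b).
  apply: divr_ge0; last by apply: ltW; rewrite addr_gt0.
  by apply: mulr_ge0; [exact: q_ge0| lra].
split; first exact: addr_ge0.
split.
  move/eqP; rewrite /h paddr_eq0 // => /andP[e1 e2].
  split.
    apply/(q_eq0 _ _ hV); move: e1; rewrite mulf_eq0 invr_eq0.
    case/orP=> /eqP // hc; exfalso; move: hc; apply/eqP.
    by rewrite gt_eqF // !mulr_gt0 ?addr_gt0.
  move: e2; rewrite mulf_eq0 invr_eq0 mulf_eq0 => /orP[/orP[|]|].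
  - by move/eqP/(q_eq0 _ _ hV) => ->; rewrite scaler0.
  - by move/eqP => ->; rewrite scale0r.
  - by move/eqP => hc; exfalso; move: hc; apply/eqP; rewrite gt_eqF // addr_gt0.
rewrite /h; case=> -> /eqP; rewrite scaler_eq0 => /orP[/eqP->|/eqP->].
  by rewrite qformE !Bf0 !mul0r mulr0 mul0r addr0.
by rewrite !qformE !Bf0 !mul0r add0r.
Qed.
End Alg3.

Section Alg4.
Context {R : realType} {p : nat}.
Implicit Types (V : 'M[R]_p) (u v w e d : 'cV[R]_p).

Lemma alg_U V (a b vt vs : R) bt bs : V^T = V -> a != 0 -> b != 0 -> a + b != 0 ->
  let lhs := (vt / a + vs / b) -
     ((vt - 2 * Bf V bt bt + Bf V bt bt) / a + (vs - 2 * Bf V bs bs + Bf V bs bs) / b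
      + qform V (bt - bs)) in
  lhs = qform V (b *: bt + a *: bs) / (a * b * (a + b))
        + qform V (bt - bs) * ((a + b)^-1 - 1) /\
  lhs = qform V (b *: bt + a *: bs) / (a * b * (a + b))
        + qform V (bt - bs) * (1 - a - b) / (a + b).
Proof.
move=> hV a0 b0 ab0 lhs; rewrite /lhs !qformE !(BfDl, BfDr, BfNl, BfNr, BfZl, BfZr).
rewrite ?(BfC V bs bt hV).
by split; field; rewrite ?a0 ?b0 ?ab0.
Qed.

Lemma alg_B V (a b vt vs : R) bt bs bb : V^T = V -> a != 0 -> b != 0 -> a + b != 0 ->
  let lhs := ((vt - 2 * Bf V bb bt + Bf V bb bb) / a + (vs - 2 * Bf V bb bs + Bf V bb bb) / b) -
     ((vt - 2 * Bf V bt bt + Bf V bt bt) / a + (vs - 2 * Bf V bs bs + Bf V bs bs) / b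
      + qform V (bt - bs)) in
  lhs = qform V (bt - bb) / a + qform V (bs - bb) / b - qform V (bt - bs) /\
  lhs = qform V (b *: bt + a *: bs - (a + b) *: bb) / (a * b * (a + b))
        + qform V (bt - bs) * (1 - a - b) / (a + b).
Proof.
move=> hV a0 b0 ab0 lhs; rewrite /lhs !qformE !(BfDl, BfDr, BfNl, BfNr, BfZl, BfZr).
rewrite ?(BfC V bs bt hV) ?(BfC V bt bb hV) ?(BfC V bs bb hV).
by split; field; rewrite ?a0 ?b0 ?ab0.
Qed.
End Alg4.

Section Alg5.
Context {R : realType} {p : nat}.
Implicit Types (V : 'M[R]_p) (u v w e d : 'cV[R]_p).

Lemma alg_U1 V (a b vt vs c1 c2 : R) bt bs : V^T = V -> a != 0 -> b != 0 -> a + b != 0 ->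
  c1 = vt - 2 * Bf V bt bt + Bf V bt bt -> c2 = vs - 2 * Bf V bs bs + Bf V bs bs ->
  (vt / a + vs / b) - (c1 / a + c2 / b + qform V (bt - bs)) =
  qform V (b *: bt + a *: bs) / (a * b * (a + b)) + qform V (bt - bs) * ((a + b)^-1 - 1).
Proof. by move=> hV a0 b0 ab0 -> ->; case: (alg_U V a b vt vs bt bs hV a0 b0 ab0). Qed.

Lemma alg_U2 V (a b vt vs c1 c2 : R) bt bs : V^T = V -> a != 0 -> b != 0 -> a + b != 0 ->
  c1 = vt - 2 * Bf V bt bt + Bf V bt bt -> c2 = vs - 2 * Bf V bs bs + Bf V bs bs ->
  (vt / a + vs / b) - (c1 / a + c2 / b + qform V (bt - bs)) =
  qform V (b *: bt + a *: bs) / (a * b * (a + b))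
        + qform V (bt - bs) * (1 - a - b) / (a + b).
Proof. by move=> hV a0 b0 ab0 -> ->; case: (alg_U V a b vt vs bt bs hV a0 b0 ab0). Qed.

Lemma alg_B1 V (a b vt vs c1 c2 e1 e2 : R) bt bs bb : V^T = V -> a != 0 -> b != 0 -> a + b != 0 ->
  c1 = vt - 2 * Bf V bt bt + Bf V bt bt -> c2 = vs - 2 * Bf V bs bs + Bf V bs bs ->
  e1 = vt - 2 * Bf V bb bt + Bf V bb bb -> e2 = vs - 2 * Bf V bb bs + Bf V bb bb ->
  (e1 / a + e2 / b) - (c1 / a + c2 / b + qform V (bt - bs)) =
  qform V (bt - bb) / a + qform V (bs - bb) / b - qform V (bt - bs).
Proof. by move=> hV a0 b0 ab0 -> -> -> ->; case: (alg_B V a b vt vs bt bs bb hV a0 b0 ab0). Qed.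

Lemma alg_B2 V (a b vt vs c1 c2 e1 e2 : R) bt bs bb : V^T = V -> a != 0 -> b != 0 -> a + b != 0 ->
  c1 = vt - 2 * Bf V bt bt + Bf V bt bt -> c2 = vs - 2 * Bf V bs bs + Bf V bs bs ->
  e1 = vt - 2 * Bf V bb bt + Bf V bb bb -> e2 = vs - 2 * Bf V bb bs + Bf V bb bb ->
  (e1 / a + e2 / b) - (c1 / a + c2 / b + qform V (bt - bs)) =
  qform V (b *: bt + a *: bs - (a + b) *: bb) / (a * b * (a + b))
        + qform V (bt - bs) * (1 - a - b) / (a + b).
Proof. by move=> hV a0 b0 ab0 -> -> -> ->; case: (alg_B V a b vt vs bt bs bb hV a0 b0 ab0). Qed.
End Alg5.

Lemma alg_B3 {R : realType} {p : nat} (V : 'M[R]_p) (a b : R) bt bs bb :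
  V^T = V -> a != 0 -> b != 0 -> a + b != 0 ->
  qform V (b *: bt + a *: bs - (a + b) *: bb) / (a * b * (a + b))
        + qform V (bt - bs) * (1 - a - b) / (a + b) =
  qform V (bt - bb) / a + qform V (bs - bb) / b - qform V (bt - bs).
Proof.
move=> hV a0 b0 ab0.
by case: (alg_B V a b 0 0 bt bs bb hV a0 b0 ab0) => <- <-.
Qed.


Section Prob.
Context {d : measure_display} {T : measurableType d} {R : realType}
  (P : probability T R).

Definition L2 (f : T -> R) :=
  measurable_fun setT f /\ P.-integrable setT (fun x => (f x ^+ 2)%:E).

Lemma ineq_prod (a b : R) : `|a * b| <= a ^+ 2 + b ^+ 2.
Proof.
rewrite normrM -(real_normK (num_real a)) -(real_normK (num_real b)).
have := normr_ge0 a; have := normr_ge0 b.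
set x := `|a|; set y := `|b| => hy hx; nra.
Qed.

Lemma L2_intM {f g} : L2 f -> L2 g ->
  P.-integrable setT (EFin \o (fun x => f x * g x)).
Proof.
move=> [mf if2] [mg ig2].
apply: (le_integrable _ _ _ (integrableD measurableT if2 ig2)) => //.
- by apply/measurable_EFinP; exact: measurable_funM.
- move=> x _ /=; rewrite lee_fin.
  rewrite [X in _ <= X]ger0_norm ?addr_ge0 ?sqr_ge0 //; exact: ineq_prod.
Qed.

Lemma L2_cst c : L2 (fun _ => c).
Proof.
split; first exact: measurable_cst.
exact: (finite_measure_integrable_cst P (c ^+ 2) measurableT).
Qed.

Lemma L2_int {f} : L2 f -> P.-integrable setT (EFin \o f).
Proof.
move=> hf; apply: (eq_integrable measurableT (EFin \o (fun x => f x * 1))); last exact: (L2_intM hf (L2_cst 1)).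
move=> x _ /=.
by rewrite mulr1.
Qed.

Lemma L2D {f g} : L2 f -> L2 g -> L2 (fun x => f x + g x).
Proof.
move=> hf hg; have [mf if2] := hf; have [mg ig2] := hg.
split; first exact: measurable_funD.
have h := integrableD measurableT (integrableD measurableT if2 ig2)
  (integrableZl measurableT 2 (L2_intM hf hg)).
apply: (eq_integrable measurableT _ _ _ h).
move=> x _ /=.
by rewrite -EFinM -!EFinD; congr EFin; ring.
Qed.

Lemma L2Z c {f} : L2 f -> L2 (fun x => c * f x).
Proof.
move=> [mf if2]; split; first by apply: measurable_funM => //; exact: measurable_cst.
apply: (eq_integrable measurableT _ _ _ (integrableZl measurableT (c ^+ 2) if2)).
move=> x _ /=.
by rewrite -EFinM exprMn.
Qed.

Lemma L2_sum (I : Type) (r : seq I) (F : I -> T -> R) :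
  (forall i, L2 (F i)) -> L2 (fun x => \sum_(i <- r) F i x).
Proof.
move=> hF; elim: r => [|i r IH].
  by under eq_fun do rewrite big_nil; exact: L2_cst.
under eq_fun do rewrite big_cons; exact: L2D.
Qed.

End Prob.


Section Cond.
Context {d : measure_display} {T : measurableType d} {R : realType}
  (P : probability T R) {Zt : finType} (Z : T -> Zt) (z : Zt)
  (mD : measurable (Z @^-1` [set z])) (pz : pZ P Z z != 0).

Local Notation D := (Z @^-1` [set z]).
Local Notation Ip f := (P.-integrable D (EFin \o f)).

Lemma Ip_L2 {f} : L2 P f -> Ip f.
Proof. by move=> hf; apply: (integrableS measurableT mD) => //; exact: L2_int. Qed.

Lemma Ip_L2M {f g} : L2 P f -> L2 P g -> Ip (fun x => f x * g x).
Proof. by move=> hf hg; apply: (integrableS measurableT mD) => //; exact: L2_intM. Qed.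

Lemma IpD f g : Ip f -> Ip g -> Ip (fun x => f x + g x).
Proof.
move=> hf hg; apply: (eq_integrable mD _ _ _ (integrableD mD hf hg)).
by move=> x _ /=.
Qed.

Lemma IpZ c f : Ip f -> Ip (fun x => c * f x).
Proof.
move=> hf; apply: (eq_integrable mD _ _ _ (integrableZl mD c hf)).
by move=> x _ /=.
Qed.

Lemma Ip_cst c : Ip (fun _ => c).
Proof. exact: (finite_measure_integrable_cst P c mD). Qed.

Lemma condED f g : Ip f -> Ip g ->
  condE P Z (fun x => f x + g x) z = condE P Z f z + condE P Z g z.
Proof. by move=> hf hg; rewrite /condE RintegralD // mulrDl. Qed.

Lemma condEZ c f : Ip f -> condE P Z (fun x => c * f x) z = c * condE P Z f z.
Proof. by move=> hf; rewrite /condE RintegralZl // mulrA. Qed.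

Lemma condE_cst c : condE P Z (fun _ => c) z = c.
Proof. by rewrite /condE Rintegral_cst // -/(pZ P Z z) mulfK. Qed.

Lemma ccovE f g : L2 P f -> L2 P g ->
  ccov P Z f g z = condE P Z (fun x => f x * g x) z - condE P Z f z * condE P Z g z.
Proof.
move=> hf hg; rewrite /ccov.
set a := condE P Z f z; set b := condE P Z g z.
have -> : (fun x => (f x - a) * (g x - b)) =
  (fun x => f x * g x + ((-b) * f x + ((-a) * g x + a * b))).
  by apply/funext => x; ring.
have If := Ip_L2 hf; have Ig := Ip_L2 hg.
rewrite condED; last 2 first.
- exact: Ip_L2M.
- by apply: IpD; [exact: IpZ|apply: IpD; [exact: IpZ|exact: Ip_cst]].
rewrite condED; [|exact: IpZ|by apply: IpD; [exact: IpZ|exact: Ip_cst]].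
rewrite condED; [|exact: IpZ|exact: Ip_cst].
rewrite condE_cst (condEZ _ _ If) (condEZ _ _ Ig) -/a -/b; ring.
Qed.


Lemma ccovC f g : ccov P Z f g z = ccov P Z g f z.
Proof. by rewrite /ccov; congr condE; apply/funext => x; rewrite mulrC. Qed.

Lemma ccovDl f1 f2 g : L2 P f1 -> L2 P f2 -> L2 P g ->
  ccov P Z (fun x => f1 x + f2 x) g z = ccov P Z f1 g z + ccov P Z f2 g z.
Proof.
move=> h1 h2 hg; rewrite !ccovE //; last exact: L2D.
have -> : (fun x => (f1 x + f2 x) * g x) = (fun x => f1 x * g x + f2 x * g x).
  by apply/funext => x; ring.
rewrite !condED; try ring; solve [exact: Ip_L2M | exact: Ip_L2].
Qed.

Lemma ccovZl c f g : L2 P f -> L2 P g ->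
  ccov P Z (fun x => c * f x) g z = c * ccov P Z f g z.
Proof.
move=> hf hg; rewrite !ccovE //; last exact: L2Z.
have -> : (fun x => c * f x * g x) = (fun x => c * (f x * g x)).
  by apply/funext => x; ring.
rewrite !condEZ; try ring; solve [exact: Ip_L2M | exact: Ip_L2].
Qed.

Lemma ccov_cstl c g : L2 P g -> ccov P Z (fun _ => c) g z = 0.
Proof.
move=> hg; rewrite ccovE //; last exact: L2_cst.
by rewrite condE_cst condEZ ?subrr //; exact: Ip_L2.
Qed.

Lemma ccov_suml (I : Type) (r : seq I) (F : I -> T -> R) g :
  (forall i, L2 P (F i)) -> L2 P g ->
  ccov P Z (fun x => \sum_(i <- r) F i x) g z = \sum_(i <- r) ccov P Z (F i) g z.
Proof.
move=> hF hg; elim: r => [|i r IH].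
  rewrite big_nil; under eq_fun do rewrite big_nil; exact: ccov_cstl.
rewrite big_cons -IH; under eq_fun do rewrite big_cons.
by rewrite ccovDl //; exact: L2_sum.
Qed.


Lemma cvar_lin {p : nat} (X : 'I_p -> T -> R) (f : T -> R) (b : 'cV[R]_p) :
  L2 P f -> (forall i, L2 P (X i)) ->
  cvar P Z (fun x => f x - Xdot X b x) z =
  cvar P Z f z - 2 * (b^T *m covXf P Z X f z) 0 0 + qform (varX P Z X z) b.
Proof.
move=> hf hX.
pose F i := fun x => b i 0 * X i x.
have hF : forall i, L2 P (F i) by move=> i; exact: L2Z.
have hXd : Xdot X b = (fun x => \sum_(i <- index_enum 'I_p) F i x).
  by apply/funext => x; rewrite /Xdot; apply: eq_bigr => i _; rewrite mulrC.
set h := (fun x => \sum_(i <- index_enum 'I_p) F i x) in hXd.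
have hh : L2 P h by exact: L2_sum.
have hmh : L2 P (fun x => -1 * h x) by exact: L2Z.
have -> : (fun x => f x - Xdot X b x) = (fun x => f x + -1 * h x).
  by apply/funext => x; rewrite hXd; ring.
rewrite /cvar ccovDl //; last exact: L2D.
rewrite (ccovC f (fun x => f x + -1 * h x)) (ccovDl f (fun x => -1 * h x)) //.
rewrite (ccovC (fun x => -1 * h x) (fun x => f x + -1 * h x)) (ccovDl f (fun x => -1 * h x)) //.
have e1 : ccov P Z f (fun x => -1 * h x) z = - ccov P Z h f z.
  by rewrite ccovC ccovZl // mulN1r.
have e2 : ccov P Z (fun x => -1 * h x) f z = - ccov P Z h f z.
  by rewrite ccovZl // mulN1r.
have e3 : ccov P Z (fun x => -1 * h x) (fun x => -1 * h x) z = ccov P Z h h z.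
  by rewrite ccovZl // ccovC ccovZl // mulN1r mulN1r opprK.
rewrite e1 e2 e3.
have Hhf : ccov P Z h f z = (b^T *m covXf P Z X f z) 0 0.
  rewrite /h ccov_suml // mxE; apply: eq_bigr => i _.
  by rewrite ccovZl // !mxE.
have Hhh : ccov P Z h h z = qform (varX P Z X z) b.
  rewrite /qform mxE /h ccov_suml //.
  apply: eq_bigr => i _; rewrite ccovZl // ccovC ccov_suml // mxE mulr_sumr mulr_suml.
  apply: eq_bigr => j _; rewrite ccovZl // !mxE; ring.
rewrite Hhf Hhh; ring.
Qed.

End Cond.


Section EZs.
Context {d : measure_display} {T : measurableType d} {R : realType}
  (P : probability T R) {Zt : finType} (Z : T -> Zt).

Lemma EZB f g : EZ P Z f - EZ P Z g = EZ P Z (fun z => f z - g z).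
Proof. by rewrite /EZ -sumrB; apply: eq_bigr => z _; rewrite mulrBr. Qed.
Lemma EZD f g : EZ P Z f + EZ P Z g = EZ P Z (fun z => f z + g z).
Proof. by rewrite /EZ -big_split; apply: eq_bigr => z _; rewrite mulrDr. Qed.
Lemma EZM f c : EZ P Z f * c = EZ P Z (fun z => f z * c).
Proof. by rewrite /EZ mulr_suml; apply: eq_bigr => z _; rewrite mulrA. Qed.
Lemma eq_EZ f g : (forall z, f z = g z) -> EZ P Z f = EZ P Z g.
Proof. by move=> h; rewrite /EZ; apply: eq_bigr => z _; rewrite h. Qed.
Lemma EZ_ge0 f : (forall z, 0 < pZ P Z z) -> (forall z, 0 <= f z) -> 0 <= EZ P Z f.
Proof.
move=> hp hf; apply: sumr_ge0 => z _; apply: mulr_ge0 => //; exact/ltW.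
Qed.
Lemma EZ_eq0 f : (forall z, 0 < pZ P Z z) -> (forall z, 0 <= f z) ->
  (EZ P Z f = 0 <-> forall z, f z = 0).
Proof.
move=> hp hf; split; last first.
  by move=> h; rewrite /EZ big1 // => z _; rewrite h mulr0.
move=> /psumr_eq0P h z.
have hnn : forall i, true -> 0 <= pZ P Z i * f i.
  by move=> i _; apply: mulr_ge0 => //; exact/ltW.
have := h hnn z isT.
- move/eqP; rewrite mulf_eq0 => /orP[|/eqP //].
  by rewrite gt_eqF // hp.
Qed.
End EZs.
Lemma EZ_comb3 {d : measure_display} {T : measurableType d} {R : realType}
  (P : probability T R) {Zt : finType} (Z : T -> Zt) f1 f2 f3 (a b : R) :
  EZ P Z f1 / a + EZ P Z f2 / b - EZ P Z f3 =
  EZ P Z (fun z => f1 z / a + f2 z / b - f3 z).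
Proof. by rewrite EZM EZM EZD EZB. Qed.

Theorem theorem2 (d : measure_display) (T : measurableType d) (R : realType)
  (P : probability T R) (k : nat) (hk : (2 <= k)%N) (pi : 'I_k -> R)
  (Zt : finType) (Z : T -> Zt) (p : nat) (X : 'I_p -> T -> R)
  (Y : 'I_k -> T -> R) (s t : 'I_k) :
  s != t ->
  (forall l, 0 < pi l < 1) -> \sum_l pi l = 1 ->
  (forall z, measurable (Z @^-1` [set z])) ->
  (forall z, (0 < P (Z @^-1` [set z]))%E) ->
  (forall l, measurable_fun setT (Y l)) ->
  (forall i, measurable_fun setT (X i)) ->
  (forall l, P.-integrable setT (fun x => ((Y l x) ^+ 2)%:E)) ->
  (forall i, P.-integrable setT (fun x => ((X i x) ^+ 2)%:E)) ->
  (forall i l, P.-integrable setT (fun x => ((X i x * Y l x) ^+ 2)%:E)) ->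
  (forall z, posdef (varX P Z X z)) ->
  let beta l z := betaf P Z X (Y l) z in
  let betabar z := \sum_l pi l *: beta l z in
  let V z := varX P Z X z in
  let sU := EZ P Z (fun z => cvar P Z (Y t) z / pi t + cvar P Z (Y s) z / pi s) in
  let sA := EZ P Z (fun z =>
               cvar P Z (fun x => Y t x - Xdot X (beta t z) x) z / pi t
             + cvar P Z (fun x => Y s x - Xdot X (beta s z) x) z / pi s)
            + EZ P Z (fun z => qform (V z) (beta t z - beta s z)) in
  let sB := EZ P Z (fun z =>
               cvar P Z (fun x => Y t x - Xdot X (betabar z) x) z / pi t
             + cvar P Z (fun x => Y s x - Xdot X (betabar z) x) z / pi s) in
  [/\ sU - sA =
        EZ P Z (fun z => qform (V z) (pi s *: beta t z + pi t *: beta s z))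
          / (pi t * pi s * (pi t + pi s))
      + EZ P Z (fun z => qform (V z) (beta t z - beta s z))
          * ((pi t + pi s)^-1 - 1),
      sB - sA =
        EZ P Z (fun z => qform (V z) (beta t z - betabar z)) / pi t
      + EZ P Z (fun z => qform (V z) (beta s z - betabar z)) / pi s
      - EZ P Z (fun z => qform (V z) (beta t z - beta s z)),
      sA <= sU /\
        (sA = sU <-> forall z, pi s *: beta t z + pi t *: beta s z = 0 /\
                     (1 - pi t - pi s) *: (beta t z - beta s z) = 0)
    & sA <= sB /\
        (sA = sB <-> forall z,
           betabar z = (pi s + pi t)^-1 *: (pi s *: beta t z + pi t *: beta s z) /\
           (1 - pi t - pi s) *: (beta t z - beta s z) = 0)].
Proof.
move=> hst hpi hsum hmZ hPZ hmY hmX hY2 hX2 hXY hpd beta betabar V sU sA sB.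
have L2Y : forall l, L2 P (Y l) by move=> l; split.
have L2X : forall i, L2 P (X i) by move=> i; split.
have hpZ : forall z, 0 < pZ P Z z.
  move=> z; apply: fine_gt0; rewrite hPZ /= ltey_eq (fin_num_measure P _ (hmZ z)) //.
have pz : forall z, pZ P Z z != 0 by move=> z; rewrite gt_eqF // hpZ.
have hVsym : forall z, (V z)^T = V z.
  by move=> z; apply/matrixP => i j; rewrite !mxE; exact: ccovC.
have hcov : forall l z, covXf P Z X (Y l) z = V z *m beta l z.
  move=> l z; rewrite /beta /betaf /V mulKVmx //; exact: posdef_unit.
have Hcv : forall l z b, cvar P Z (fun x => Y l x - Xdot X b x) z =
    cvar P Z (Y l) z - 2 * Bf (V z) b (beta l z) + Bf (V z) b b.
  move=> l z b; rewrite (cvar_lin P Z z (hmZ z) (pz z)) // hcov /Bf mulmxA //.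
have ha : 0 < pi t by case/andP: (hpi t).
have hb : 0 < pi s by case/andP: (hpi s).
have hab : pi t + pi s <= 1.
  rewrite -hsum (bigD1 t) //= (bigD1 s) /=; last by rewrite hst.
  rewrite addrA lerDl; apply: sumr_ge0 => l _; exact/ltW/(andP (hpi l)).1.
have a0 : pi t != 0 by rewrite gt_eqF.
have b0 : pi s != 0 by rewrite gt_eqF.
have ab0 : pi t + pi s != 0 by rewrite gt_eqF // addr_gt0.
have HU : sU - sA = EZ P Z (fun z =>
    qform (V z) (pi s *: beta t z + pi t *: beta s z) / (pi t * pi s * (pi t + pi s))
    + qform (V z) (beta t z - beta s z) * (1 - pi t - pi s) / (pi t + pi s)).
  rewrite /sU /sA EZD EZB; apply: eq_EZ => z.
  apply: alg_U2; [exact: hVsym|exact: a0|exact: b0|exact: ab0|exact: Hcv|exact: Hcv].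
have HB : sB - sA = EZ P Z (fun z =>
    qform (V z) (pi s *: beta t z + pi t *: beta s z - (pi t + pi s) *: betabar z)
      / (pi t * pi s * (pi t + pi s))
    + qform (V z) (beta t z - beta s z) * (1 - pi t - pi s) / (pi t + pi s)).
  rewrite /sB /sA EZD EZB; apply: eq_EZ => z.
  apply: alg_B2; [exact: hVsym|exact: a0|exact: b0|exact: ab0|exact: Hcv|exact: Hcv|exact: Hcv|exact: Hcv].
split.
- rewrite /sU /sA EZD EZB EZM EZM EZD; apply: eq_EZ => z.
  apply: alg_U1; [exact: hVsym|exact: a0|exact: b0|exact: ab0|exact: Hcv|exact: Hcv].
- apply: (etrans HB); apply: (etrans _ (esym (EZ_comb3 _ _ _ _ _ _ _))).
  apply: eq_EZ => z.
  by apply: alg_B3; [exact: hVsym|exact: a0|exact: b0|exact: ab0].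
- have HUz : forall z,
    let h := qform (V z) (pi s *: beta t z + pi t *: beta s z) / (pi t * pi s * (pi t + pi s))
      + qform (V z) (beta t z - beta s z) * (1 - pi t - pi s) / (pi t + pi s) in
    0 <= h /\ (h = 0 <-> pi s *: beta t z + pi t *: beta s z = 0 /\
      (1 - pi t - pi s) *: (beta t z - beta s z) = 0).
    by move=> z; exact: hlem.
  have hge : forall z, 0 <= qform (V z) (pi s *: beta t z + pi t *: beta s z) / (pi t * pi s * (pi t + pi s))
      + qform (V z) (beta t z - beta s z) * (1 - pi t - pi s) / (pi t + pi s).
    by move=> z; exact: (HUz z).1.
  split.
    rewrite -subr_ge0 HU; exact: EZ_ge0.
  split => [Heq|H].
    have H0 : sU - sA = 0 by rewrite Heq subrr.
    rewrite HU in H0; have := (EZ_eq0 _ _ _ hpZ hge).1 H0 => H1 z.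
    exact: ((HUz z).2.1 (H1 z)).
  apply/eqP; rewrite eq_sym -subr_eq0; apply/eqP; rewrite HU.
  apply/(EZ_eq0 _ _ _ hpZ hge) => z; exact: ((HUz z).2.2 (H z)).
- have HBz : forall z,
    let h := qform (V z) (pi s *: beta t z + pi t *: beta s z - (pi t + pi s) *: betabar z)
      / (pi t * pi s * (pi t + pi s))
      + qform (V z) (beta t z - beta s z) * (1 - pi t - pi s) / (pi t + pi s) in
    0 <= h /\ (h = 0 <-> pi s *: beta t z + pi t *: beta s z - (pi t + pi s) *: betabar z = 0 /\
      (1 - pi t - pi s) *: (beta t z - beta s z) = 0).
    by move=> z; exact: hlem.
  have hge : forall z, 0 <= qform (V z) (pi s *: beta t z + pi t *: beta s z - (pi t + pi s) *: betabar z)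
      / (pi t * pi s * (pi t + pi s))
      + qform (V z) (beta t z - beta s z) * (1 - pi t - pi s) / (pi t + pi s).
    by move=> z; exact: (HBz z).1.
  have Ee : forall z, (pi s *: beta t z + pi t *: beta s z - (pi t + pi s) *: betabar z = 0) <->
      betabar z = (pi s + pi t)^-1 *: (pi s *: beta t z + pi t *: beta s z).
    move=> z; rewrite [pi s + pi t]addrC; split.
      move/eqP; rewrite subr_eq0 => /eqP ->.
      by rewrite scalerA mulVf // scale1r.
    move=> ->; rewrite scalerA divff // scale1r; exact: subrr.
  split.
    rewrite -subr_ge0 HB; exact: EZ_ge0.
  split => [Heq|H].
    have H0 : sB - sA = 0 by rewrite Heq subrr.
    rewrite HB in H0; have := (EZ_eq0 _ _ _ hpZ hge).1 H0 => H1 z.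
    have [h1 h2] := (HBz z).2.1 (H1 z); split => //; exact/Ee.
  apply/eqP; rewrite eq_sym -subr_eq0; apply/eqP; rewrite HB.
  apply/(EZ_eq0 _ _ _ hpZ hge) => z; apply: (HBz z).2.2.
  have [h1 h2] := H z; split => //; exact/Ee.
Qed.
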